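(* Let $\varrho\in C(\mathbb{C};\mathbb{C})$ be real differentiable in $z_0\in\mathbb{C}$ with $(\partial_{\mathrm{wirt}}\varrho(z_0),\overline{\partial}_{\mathrm{wirt}}\varrho(z_0))\neq(0,0)$, let $K\subseteq\mathbb{C}$ be compact and $\varepsilon>0$. (i) If $\partial_{\mathrm{wirt}}\varrho(z_0)\neq0$ and $\overline{\partial}_{\mathrm{wirt}}\varrho(z_0)=0$, there are $\mathbb{C}$-affine maps $\phi,\psi:\mathbb{C}\to\mathbb{C}$ with $\sup_{z\in K}|(\psi\circ\varrho\circ\phi)(z)-z|<\varepsilon$. (ii) If $\partial_{\mathrm{wirt}}\varrho(z_0)=0$ and $\overline{\partial}_{\mathrm{wirt}}\varrho(z_0)\neq0$, there are $\mathbb{C}$-affine maps $\phi,\psi:\mathbb{C}\to\mathbb{C}$ with $\sup_{z\in K}|(\psi\circ\varrho\circ\phi)(z)-\overline{z}|<\varepsilon$. (iii) If $\partial_{\mathrm{wirt}}\varrho(z_0)\neq0\neq\overline{\partial}_{\mathrm{wirt}}\varrho(z_0)$, there are $\mathbb{C}$-affine maps $\phi:\mathbb{C}\to\mathbb{C}^2$ and $\psi:\mathbb{C}^2\to\mathbb{C}^2$ with $\sup_{z\in K}\|(\psi\circ\varrho^{\times2}\circ\phi)(z)-(z,\overline{z})\|_{\mathbb{C}^2}<\varepsilon$.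
   Context: Wirtinger derivatives: $\partial_{\mathrm{wirt}}\varrho=\frac12\left(\frac{\partial\varrho}{\partial x}-\mathrm{i}\frac{\partial\varrho}{\partial y}\right)$, $\overline{\partial}_{\mathrm{wirt}}\varrho=\frac12\left(\frac{\partial\varrho}{\partial x}+\mathrm{i}\frac{\partial\varrho}{\partial y}\right)$. $\varrho$ is real differentiable at $z_0$ if the partial derivatives exist at $z_0$ and $\lim_{h\to0}\frac{\varrho(z_0+h)-\varrho(z_0)-\frac{\partial\varrho}{\partial x}(z_0)\mathrm{Re}(h)-\frac{\partial\varrho}{\partial y}(z_0)\mathrm{Im}(h)}{h}=0$. A map $\mathbb{C}^a\to\mathbb{C}^b$ is $\mathbb{C}$-affine if it has the form $z\mapsto Az+b$ with complex $A,b$. $\varrho^{\times2}(z_1,z_2)=(\varrho(z_1),\varrho(z_2))$. *)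

(* Defs.v *)
From Stdlib Require Import Reals List.
From Coquelicot Require Import Coquelicot.
Open Scope R_scope.
Open Scope C_scope.

Definition has_partial_x (rho : C -> C) (z0 d : C) : Prop :=
  forall eps : R, 0 < eps -> exists delta : R, 0 < delta /\
    forall t : R, t <> 0 -> Rabs t < delta ->
      Cmod ((rho (z0 + RtoC t) - rho z0) / RtoC t - d) < eps.

Definition has_partial_y (rho : C -> C) (z0 d : C) : Prop :=
  forall eps : R, 0 < eps -> exists delta : R, 0 < delta /\
    forall t : R, t <> 0 -> Rabs t < delta ->
      Cmod ((rho (z0 + Ci * RtoC t) - rho z0) / RtoC t - d) < eps.

Definition real_diff_with (rho : C -> C) (z0 dx dy : C) : Prop :=
  has_partial_x rho z0 dx /\ has_partial_y rho z0 dy /\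
  forall eps : R, 0 < eps -> exists delta : R, 0 < delta /\
    forall h : C, h <> 0 -> Cmod h < delta ->
      Cmod ((rho (z0 + h) - rho z0 - dx * RtoC (Re h) - dy * RtoC (Im h)) / h) < eps.

Definition wirt (dx dy : C) : C := (dx - Ci * dy) / 2.
Definition wirt_bar (dx dy : C) : C := (dx + Ci * dy) / 2.

Definition compactC (K : C -> Prop) : Prop :=
  forall (I : Type) (U : I -> C -> Prop),
    (forall i, @open C_UniformSpace (U i)) ->
    (forall z, K z -> exists i, U i z) ->
    exists l : list I, forall z, K z -> exists i, In i l /\ U i z.

Definition affine11 (f : C -> C) : Prop :=
  exists a b : C, forall z, f z = a * z + b.
Definition affine12 (f : C -> C * C) : Prop :=
  exists a1 a2 b1 b2 : C, forall z, f z = (a1 * z + b1, a2 * z + b2).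
Definition affine22 (f : C * C -> C * C) : Prop :=
  exists a11 a12 a21 a22 b1 b2 : C, forall w,
    f w = (a11 * fst w + a12 * snd w + b1, a21 * fst w + a22 * snd w + b2).

Definition norm2 (w : C * C) : R := sqrt (Cmod (fst w) ^ 2 + Cmod (snd w) ^ 2).

Definition prod2 (rho : C -> C) (w : C * C) : C * C := (rho (fst w), rho (snd w)).

Definition sup_lt (K : C -> Prop) (g : C -> R) (eps : R) : Prop :=
  exists s : R, s < eps /\ forall z, K z -> g z <= s.

(* Main.v *)
Require Import Defs.
From Stdlib Require Import Reals List Lra Lia ZArith.
From Coquelicot Require Import Coquelicot.
Open Scope R_scope.
Open Scope C_scope.


Lemma open_Cmod_lt (r : R) : @open C_UniformSpace (fun z => (Cmod z < r)%R).
Proof.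
  intros z Hz.
  assert (Hp : (0 < (r - Cmod z) / 2)%R) by lra.
  exists (mkposreal _ Hp). intros y Hy.
  apply C_NormedModule_mixin_compat2 in Hy. simpl in Hy.
  assert (Hs : sqrt 2 < 2).
  { rewrite <- (sqrt_square 2) at 2 by lra. apply sqrt_lt_1; lra. }
  assert (Hy' : Cmod (y - z) < r - Cmod z).
  { change (minus y z) with (y - z) in Hy.
    assert (0 <= Cmod (y - z)) by apply Cmod_ge_0. nra. }
  replace y with (z + (y - z)) by ring.
  eapply Rle_lt_trans. apply Cmod_triangle. lra.
Qed.

Lemma list_bound (l : list nat) : exists N, forall i, In i l -> (i <= N)%nat.
Proof.
  induction l as [|a l [N HN]]. exists 0%nat. intros i [].
  exists (Nat.max a N). intros i [<-|Hi]. apply Nat.le_max_l.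
  specialize (HN i Hi). lia.
Qed.

Lemma compact_bounded K : compactC K -> exists M, 0 <= M /\ forall z, K z -> Cmod z <= M.
Proof.
  intros HK.
  destruct (HK nat (fun n z => (Cmod z < INR n)%R)) as [l Hl].
  - intros n. apply open_Cmod_lt.
  - intros z _. destruct (archimed (Cmod z)) as [H1 _].
    assert (0 <= Cmod z) by apply Cmod_ge_0.
    exists (Z.to_nat (up (Cmod z))). rewrite INR_IZR_INZ, Z2Nat.id. lra.
    apply le_IZR. lra.
  - destruct (list_bound l) as [N HN]. exists (INR N). split. apply pos_INR.
    intros z Hz. destruct (Hl z Hz) as [i [Hi Hz']].
    apply Rlt_le, (Rlt_le_trans _ _ _ Hz'). apply le_INR, HN, Hi.
Qed.


Lemma wirt_id dx dy h : dx * RtoC (Re h) + dy * RtoC (Im h) = wirt dx dy * h + wirt_bar dx dy * Cconj h.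
Proof.
  destruct dx as [a b], dy as [c d], h as [x y]. unfold wirt, wirt_bar.
  apply injective_projections; simpl; unfold Cdiv, Cinv, Cmult, Cplus, Cminus, Copp, Ci, Cconj, RtoC; simpl; field.
Qed.

Lemma lin rho z0 dx dy M : real_diff_with rho z0 dx dy -> 0 <= M ->
  forall eta, 0 < eta -> exists d, 0 < d /\ forall w, Cmod w <= M ->
  Cmod (rho (z0 + RtoC d * w) - rho z0 - wirt dx dy * (RtoC d * w)
        - wirt_bar dx dy * Cconj (RtoC d * w)) <= eta * d.
Proof.
  intros [_ [_ H]] HM eta Heta.
  assert (Hq : 0 < eta / (M + 1)) by (apply Rdiv_lt_0_compat; lra).
  destruct (H _ Hq) as [d0 [Hd0 Hd]].
  exists (d0 / (M + 1))%R. split. apply Rdiv_lt_0_compat; lra.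
  intros w Hw. set (d := (d0 / (M + 1))%R).
  assert (Hdp : 0 < d) by (apply Rdiv_lt_0_compat; lra).
  destruct (Ceq_dec w 0) as [->|Hw0].
  - rewrite Cmult_0_r, Cplus_0_r.
    replace (rho z0 - rho z0 - wirt dx dy * 0 - wirt_bar dx dy * Cconj 0) with (RtoC 0).
    rewrite Cmod_0. nra.
    apply injective_projections; simpl; ring.
  - set (h := RtoC d * w).
    assert (Hh0 : h <> 0).
    { unfold h. intros E. apply (f_equal Cmod) in E. rewrite Cmod_0, Cmod_mult, Cmod_R, Rabs_pos_eq in E by lra.
      apply Rmult_integral in E. destruct E as [E|E]. lra. apply Hw0, Cmod_eq_0, E. }
    assert (Hmh : Cmod h = (d * Cmod w)%R).
    { unfold h. rewrite Cmod_mult, Cmod_R, Rabs_pos_eq; lra. }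
    assert (Hwp : 0 < Cmod w) by (apply Cmod_gt_0; auto).
    assert (Hhd : Cmod h < d0).
    { rewrite Hmh. unfold d. apply Rlt_le_trans with (d0 / (M+1) * (M+1))%R.
      apply Rmult_lt_compat_l. apply Rdiv_lt_0_compat; lra. lra.
      right. field. lra. }
    specialize (Hd h Hh0 Hhd).
    rewrite Cmod_div in Hd by auto.
    assert (E : rho (z0 + h) - rho z0 - dx * Re h - dy * Im h = rho (z0 + h) - rho z0 - wirt dx dy * h - wirt_bar dx dy * Cconj h).
    { transitivity (rho (z0 + h) - rho z0 - (dx * Re h + dy * Im h)). ring. rewrite wirt_id. ring. }
    rewrite E in Hd.
    assert (Hhp : 0 < Cmod h) by (apply Cmod_gt_0; auto).
    apply Rmult_lt_compat_r with (r := Cmod h) in Hd; auto.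
    unfold Rdiv in Hd at 1. rewrite Rmult_assoc, Rinv_l, Rmult_1_r in Hd by lra.
    apply Rlt_le, (Rlt_le_trans _ _ _ Hd).
    rewrite Hmh. replace (eta * d)%R with (eta / (M+1) * (d * (M+1)))%R by (field; lra).
    apply Rmult_le_compat_l. lra. apply Rmult_le_compat_l; lra.
Qed.


Lemma div_bound (X c : C) (d k : R) : c <> 0 -> 0 < d -> Cmod X <= (k * d)%R ->
  Cmod (X / (c * RtoC d)) <= (k / Cmod c)%R.
Proof.
  intros Hc Hd H.
  assert (Hcd : c * RtoC d <> 0).
  { intros E. apply (f_equal Cmod) in E. rewrite Cmod_0, Cmod_mult, Cmod_R, (Rabs_pos_eq d) in E by lra.
    apply Rmult_integral in E. destruct E as [E|E]. apply Hc, Cmod_eq_0, E. lra. }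
  assert (0 < Cmod c) by (apply Cmod_gt_0; auto).
  rewrite Cmod_div, Cmod_mult, Cmod_R, Rabs_pos_eq by (auto; lra).
  apply Rmult_le_reg_r with (Cmod c * d)%R. nra.
  unfold Rdiv. rewrite Rmult_assoc, Rinv_l by nra.
  replace (k * / Cmod c * (Cmod c * d))%R with (k * d)%R by (field; lra). lra.
Qed.

Lemma conj_Rmul (d : R) z : Cconj (RtoC d * z) = RtoC d * Cconj z.
Proof. destruct z; apply injective_projections; simpl; ring. Qed.

Lemma conj_Rmul_i (d : R) z : Cconj (RtoC d * (Ci * z)) = - Ci * (RtoC d * Cconj z).
Proof. destruct z; apply injective_projections; simpl; ring. Qed.

Lemma Cmod_Ci_mul z : Cmod (Ci * z) = Cmod z.
Proof. rewrite Cmod_mult, Cmod_Ci. ring. Qed.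

Lemma norm2_le x y : norm2 (x, y) <= (Cmod x + Cmod y)%R.
Proof.
  unfold norm2; simpl.
  assert (0 <= Cmod x) by apply Cmod_ge_0. assert (0 <= Cmod y) by apply Cmod_ge_0.
  rewrite <- (sqrt_square (Cmod x + Cmod y)) by lra.
  apply sqrt_le_1; nra.
Qed.


Lemma part1 rho z0 dx dy K eps : real_diff_with rho z0 dx dy -> compactC K -> 0 < eps ->
  wirt dx dy <> 0 -> wirt_bar dx dy = 0 ->
     exists phi psi : C -> C, affine11 phi /\ affine11 psi /\
       sup_lt K (fun z => Cmod (psi (rho (phi z)) - z)) eps.
Proof.
  intros Hd HK He Ha Hb.
  set (a := wirt dx dy) in *.
  destruct (compact_bounded K HK) as [M [HM HMK]].
  assert (Hap : 0 < Cmod a) by (apply Cmod_gt_0; auto).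
  assert (Heta : 0 < (eps * Cmod a / 2)%R) by (apply Rdiv_lt_0_compat; nra).
  destruct (lin rho z0 dx dy M Hd HM _ Heta) as [d [Hdp Hlin]].
  exists (fun z => RtoC d * z + z0), (fun w => / (a * RtoC d) * w + (- rho z0 / (a * RtoC d))).
  assert (Hd0 : RtoC d <> 0) by (intros E; injection E; lra).
  split. exists (RtoC d), z0. auto.
  split. eexists _, _. intros; reflexivity.
  exists (eps / 2)%R. split. lra.
  intros z Hz. specialize (Hlin z (HMK z Hz)).
  rewrite Hb in Hlin. fold a in Hlin.
  cbv beta. replace (RtoC d * z + z0) with (z0 + RtoC d * z) by ring.
  replace (/ (a * RtoC d) * rho (z0 + RtoC d * z) + - rho z0 / (a * RtoC d) - z)
    with ((rho (z0 + RtoC d * z) - rho z0 - a * (RtoC d * z) - 0 * Cconj (RtoC d * z)) / (a * RtoC d))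
    by (field; auto).
  eapply Rle_trans. apply (div_bound _ a d _ Ha Hdp Hlin).
  right. field. lra.
Qed.

Lemma part2 rho z0 dx dy K eps : real_diff_with rho z0 dx dy -> compactC K -> 0 < eps ->
  wirt dx dy = 0 -> wirt_bar dx dy <> 0 ->
     exists phi psi : C -> C, affine11 phi /\ affine11 psi /\
       sup_lt K (fun z => Cmod (psi (rho (phi z)) - Cconj z)) eps.
Proof.
  intros Hd HK He Ha Hb.
  set (a := wirt_bar dx dy) in *.
  destruct (compact_bounded K HK) as [M [HM HMK]].
  assert (Hap : 0 < Cmod a) by (apply Cmod_gt_0; auto).
  assert (Heta : 0 < (eps * Cmod a / 2)%R) by (apply Rdiv_lt_0_compat; nra).
  destruct (lin rho z0 dx dy M Hd HM _ Heta) as [d [Hdp Hlin]].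
  exists (fun z => RtoC d * z + z0), (fun w => / (a * RtoC d) * w + (- rho z0 / (a * RtoC d))).
  assert (Hd0 : RtoC d <> 0) by (intros E; injection E; lra).
  split. exists (RtoC d), z0. auto.
  split. eexists _, _. intros; reflexivity.
  exists (eps / 2)%R. split. lra.
  intros z Hz. specialize (Hlin z (HMK z Hz)).
  rewrite Ha in Hlin. fold a in Hlin. rewrite conj_Rmul in Hlin.
  cbv beta. replace (RtoC d * z + z0) with (z0 + RtoC d * z) by ring.
  replace (/ (a * RtoC d) * rho (z0 + RtoC d * z) + - rho z0 / (a * RtoC d) - Cconj z)
    with ((rho (z0 + RtoC d * z) - rho z0 - 0 * (RtoC d * z) - a * (RtoC d * Cconj z)) / (a * RtoC d))
    by (field; auto).
  eapply Rle_trans. apply (div_bound _ a d _ Hb Hdp Hlin).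
  right. field. lra.
Qed.


Lemma Ci2 : 1 + Ci * Ci = 0.
Proof. apply injective_projections; simpl; ring. Qed.

Lemma tri_Ci x y s : Cmod (x + s * Ci * y) <= (Cmod x + Cmod y)%R -> True.
Proof. auto. Qed.

Lemma tri_m x y : Cmod (x - Ci * y) <= (Cmod x + Cmod y)%R.
Proof. unfold Cminus. eapply Rle_trans. apply Cmod_triangle. rewrite Cmod_opp, Cmod_Ci_mul. lra. Qed.
Lemma tri_p x y : Cmod (x + Ci * y) <= (Cmod x + Cmod y)%R.
Proof. eapply Rle_trans. apply Cmod_triangle. rewrite Cmod_Ci_mul. lra. Qed.

Lemma Cmod_2a (a : C) : Cmod (2 * a) = (2 * Cmod a)%R.
Proof. rewrite Cmod_mult. f_equal. rewrite Cmod_R. apply Rabs_pos_eq. lra. Qed.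

Lemma part3 rho z0 dx dy K eps : real_diff_with rho z0 dx dy -> compactC K -> 0 < eps ->
  wirt dx dy <> 0 -> wirt_bar dx dy <> 0 ->
     exists (phi : C -> C * C) (psi : C * C -> C * C), affine12 phi /\ affine22 psi /\
       sup_lt K (fun z => norm2 ((fst (psi (prod2 rho (phi z))) - z,
                                  snd (psi (prod2 rho (phi z))) - Cconj z))) eps.
Proof.
  intros Hd HK He Ha Hb.
  set (a := wirt dx dy) in *. set (b := wirt_bar dx dy) in *.
  destruct (compact_bounded K HK) as [M [HM HMK]].
  assert (Hap : 0 < Cmod a) by (apply Cmod_gt_0; auto).
  assert (Hbp : 0 < Cmod b) by (apply Cmod_gt_0; auto).
  assert (Hs : 0 < (/ Cmod a + / Cmod b)%R).
  { assert (0 < / Cmod a) by (apply Rinv_0_lt_compat; lra).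
    assert (0 < / Cmod b) by (apply Rinv_0_lt_compat; lra). lra. }
  assert (Heta : 0 < (eps / (2 * (/ Cmod a + / Cmod b)))%R) by (apply Rdiv_lt_0_compat; nra).
  set (eta := (eps / (2 * (/ Cmod a + / Cmod b)))%R) in *.
  destruct (lin rho z0 dx dy M Hd HM _ Heta) as [d [Hdp Hlin]].
  fold a b in Hlin.
  set (r0 := rho z0).
  set (D1 := 2 * a * RtoC d). set (D2 := 2 * b * RtoC d).
  assert (Hd0 : RtoC d <> 0) by (intros E; injection E; lra).
  assert (H20 : (2 : C) <> 0) by (intros E; injection E; lra).
  exists (fun z => (RtoC d * z + z0, Ci * RtoC d * z + z0)).
  exists (fun w => (/ D1 * fst w + (- Ci / D1) * snd w + (- (1 - Ci) * r0 / D1),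
                    / D2 * fst w + (Ci / D2) * snd w + (- (1 + Ci) * r0 / D2))).
  split. exists (RtoC d), (Ci * RtoC d), z0, z0. auto.
  split. do 6 eexists. intros; reflexivity.
  exists (eps / 2)%R. split. lra.
  intros z Hz. cbv beta. unfold prod2. simpl fst. simpl snd.
  assert (Hz1 := Hlin z (HMK z Hz)).
  assert (Hz2 := Hlin (Ci * z) ltac:(rewrite Cmod_Ci_mul; apply HMK, Hz)).
  rewrite conj_Rmul in Hz1. rewrite conj_Rmul_i in Hz2.
  replace (z0 + RtoC d * (Ci * z)) with (Ci * RtoC d * z + z0) in Hz2 by ring.
  replace (z0 + RtoC d * z) with (RtoC d * z + z0) in Hz1 by ring.
  change (rho z0) with r0 in Hz1. change (rho z0) with r0 in Hz2.
  set (p1 := rho (RtoC d * z + z0)) in *. set (p2 := rho (Ci * RtoC d * z + z0)) in *.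
  set (E1 := p1 - r0 - a * (RtoC d * z) - b * (RtoC d * Cconj z)) in *.
  set (E2 := p2 - r0 - a * (RtoC d * (Ci * z)) - b * (- Ci * (RtoC d * Cconj z))) in *.
  assert (Q1 : / D1 * p1 + - Ci / D1 * p2 + - (1 - Ci) * r0 / D1 - z
      = (E1 - Ci * E2) / D1 + (1 + Ci * Ci) * (b * RtoC d * Cconj z - a * RtoC d * z) / D1).
  { unfold E1, E2, D1. field. split; auto. }
  assert (Q2 : / D2 * p1 + Ci / D2 * p2 + - (1 + Ci) * r0 / D2 - Cconj z
      = (E1 + Ci * E2) / D2 + (1 + Ci * Ci) * (a * RtoC d * z - b * RtoC d * Cconj z) / D2).
  { unfold E1, E2, D2. field. split; auto. }
  rewrite Q1, Q2, Ci2, !Cmult_0_l. unfold Cdiv at 2 4. rewrite !Cmult_0_l, !Cplus_0_r.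
  eapply Rle_trans. apply norm2_le.
  assert (B1 : Cmod (E1 - Ci * E2) <= ((2 * eta) * d)%R) by (eapply Rle_trans; [apply tri_m|lra]).
  assert (B2 : Cmod (E1 + Ci * E2) <= ((2 * eta) * d)%R) by (eapply Rle_trans; [apply tri_p|lra]).
  assert (H2a : 2 * a <> 0) by (intros E; apply (f_equal Cmod) in E; rewrite Cmod_2a, Cmod_0 in E; lra).
  assert (H2b : 2 * b <> 0) by (intros E; apply (f_equal Cmod) in E; rewrite Cmod_2a, Cmod_0 in E; lra).
  pose proof (div_bound _ _ d _ H2a Hdp B1) as C1.
  pose proof (div_bound _ _ d _ H2b Hdp B2) as C2.
  fold D1 in C1. fold D2 in C2. rewrite Cmod_2a in C1, C2.
  eapply Rle_trans. apply Rplus_le_compat; [apply C1|apply C2].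
  right. unfold eta. field. repeat split; lra.
Qed.

Theorem proposition3p1 (rho : C -> C) (z0 dx dy : C) (K : C -> Prop) (eps : R) :
  (forall z : C, continuous rho z) ->
  real_diff_with rho z0 dx dy ->
  (wirt dx dy, wirt_bar dx dy) <> (RtoC 0, RtoC 0) ->
  compactC K -> 0 < eps ->
  (wirt dx dy <> 0 -> wirt_bar dx dy = 0 ->
     exists phi psi : C -> C, affine11 phi /\ affine11 psi /\
       sup_lt K (fun z => Cmod (psi (rho (phi z)) - z)) eps) /\
  (wirt dx dy = 0 -> wirt_bar dx dy <> 0 ->
     exists phi psi : C -> C, affine11 phi /\ affine11 psi /\
       sup_lt K (fun z => Cmod (psi (rho (phi z)) - Cconj z)) eps) /\
  (wirt dx dy <> 0 -> wirt_bar dx dy <> 0 ->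
     exists (phi : C -> C * C) (psi : C * C -> C * C), affine12 phi /\ affine22 psi /\
       sup_lt K (fun z => norm2 ((fst (psi (prod2 rho (phi z))) - z,
                                  snd (psi (prod2 rho (phi z))) - Cconj z))) eps).
Proof.
  intros _ Hd _ HK He.
  split; [|split].
  - exact (part1 rho z0 dx dy K eps Hd HK He).
  - exact (part2 rho z0 dx dy K eps Hd HK He).
  - exact (part3 rho z0 dx dy K eps Hd HK He).
Qed.
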